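(* Let $k$ be a field and let $G$ be an infinite group. Then for every integer $n \geq 1$ there exists a canonical ring isomorphism $\mathrm{LNUCA}_{c}(G, k^n)\simeq M_n(D^1(k[G]))$.
   Context: Configurations and shift: for a set $A$ and a group $G$, $A^G$ is the set of maps $G\to A$; for $g\in G$, $x\in A^G$ set $(gx)(h)=x(g^{-1}h)$, so $(g^{-1}x)(h)=x(gh)$. For a subset $M\subset G$, a set $S$ of maps $A^M\to A$ and $s\in S^G$, the non-uniform cellular automaton (NUCA) $\sigma_s\colon A^G\to A^G$ is $\sigma_s(x)(g)=s(g)\big((g^{-1}x)\vert_M\big)$; $M$ is its memory. For a vector space $V$ over a field $k$, $\mathrm{LNUCA}_c(G,V)$ denotes the set of maps $\tau\colon V^G\to V^G$ such that $\tau=\sigma_s$ for some finite $M\subset G$ and some $s\in \mathcal{L}(V^M,V)^G$ ($k$-linear maps) for which there is a finite $E\subset G$ with $s(g)=s(h)$ for all $g,h\in G\setminus E$. It is a ring under pointwise addition and composition of maps. For a ring $R$ and group $G$, $R[G]$ is the group ring; $(R[G])[G]$ denotes the set of finitely supported maps $\beta\colon G\to R[G]$, written $g\mapsto\beta(g)$, with $\beta(g)(h)\in R$. The ring $D^1(R[G])$ is the set $R[G]\times (R[G])[G]$ with componentwise addition and multiplication $(\alpha_1,\beta_1)*(\alpha_2,\beta_2)=(\alpha_1\alpha_2,\ \alpha_1\beta_2+\beta_1\alpha_2+\beta_1\beta_2)$, where $\alpha_1\alpha_2$ is the group ring product and, for $\alpha\in R[G]$, $\beta,\gamma\in (R[G])[G]$,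 $g,h\in G$, the twisted products are $(\alpha\beta)(g)(h)=\sum_{t\in G}\alpha(t)\beta(gt)(t^{-1}h)$, $(\beta\alpha)(g)(h)=\sum_{t\in G}\beta(g)(t)\alpha(t^{-1}h)$, $(\beta\gamma)(g)(h)=\sum_{t\in G}\beta(g)(t)\gamma(gt)(t^{-1}h)$. $M_n(\cdot)$ denotes the ring of $n\times n$ matrices. *)

(* Defs.v *)
From HB Require Import structures.
From mathcomp Require Import all_boot all_order all_algebra.
From mathcomp Require Import finmap.
From mathcomp Require Import boolp classical_sets cardinality fsbigop.

Set Implicit Arguments.
Unset Strict Implicit.
Unset Printing Implicit Defensive.

Import Order.TTheory GRing.Theory Num.Theory.
Local Open Scope classical_set_scope.
Local Open Scope ring_scope.

Definition is_klinear (k : fieldType) (n : nat) (G : choiceType) (M : {fset G})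
    (f : (M -> 'rV[k]_n) -> 'rV[k]_n) : Prop :=
  forall (a : k) (x y : M -> 'rV[k]_n),
    f (fun m => a *: x m + y m) = a *: f x + f y.

(** The NUCA sigma_s with memory M and local rules s :
    sigma_s(x)(g) = s(g)((g^{-1} x)|_M), where (g^{-1}x)(m) = x(g m). *)
Definition nuca (k : fieldType) (n : nat) (G : groupType) (M : {fset G})
    (s : G -> (M -> 'rV[k]_n) -> 'rV[k]_n) :
    (G -> 'rV[k]_n) -> (G -> 'rV[k]_n) :=
  fun x g => s g (fun m : M => x (g * val m)%g).

Definition LNUCA_c (k : fieldType) (n : nat) (G : groupType)
    (tau : (G -> 'rV[k]_n) -> (G -> 'rV[k]_n)) : Prop :=
  exists (M : {fset G}) (s : G -> (M -> 'rV[k]_n) -> 'rV[k]_n),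
    [/\ forall g, is_klinear (s g),
        exists E : {fset G}, forall g h, g \notin E -> h \notin E -> s g = s h
      & tau = nuca s].

Definition ca_add (k : fieldType) (n : nat) (G : Type)
    (t1 t2 : (G -> 'rV[k]_n) -> (G -> 'rV[k]_n)) :=
  fun x g => t1 x g + t2 x g.

(** An element of k[G] is a finitely supported map G -> k. *)
Definition gr_good (k : fieldType) (G : choiceType) (a : G -> k) : Prop :=
  finite_set [set g | a g != 0].

(** An element of (k[G])[G] is a finitely supported map G -> k[G]. *)
Definition grgr_good (k : fieldType) (G : choiceType) (b : G -> G -> k) : Prop :=
  finite_set [set g | b g <> (fun _ => 0)] /\ forall g, gr_good (b g).

Definition gr_mul (k : fieldType) (G : groupType) (a1 a2 : G -> k) : G -> k :=
  fun h => \sum_(t \in [set: G]) a1 t * a2 (t^-1 * h)%g.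

Definition gr_one (k : fieldType) (G : groupType) : G -> k :=
  fun h => if h == 1%g then 1 else 0.

Definition tw_ab (k : fieldType) (G : groupType) (a : G -> k) (b : G -> G -> k) :
    G -> G -> k :=
  fun g h => \sum_(t \in [set: G]) a t * b (g * t)%g (t^-1 * h)%g.

Definition tw_ba (k : fieldType) (G : groupType) (b : G -> G -> k) (a : G -> k) :
    G -> G -> k :=
  fun g h => \sum_(t \in [set: G]) b g t * a (t^-1 * h)%g.

Definition tw_bb (k : fieldType) (G : groupType) (b c : G -> G -> k) :
    G -> G -> k :=
  fun g h => \sum_(t \in [set: G]) b g t * c (g * t)%g (t^-1 * h)%g.

Definition D1 (k : fieldType) (G : groupType) : Type :=
  ((G -> k) * (G -> G -> k))%type.

Definition D1_good (k : fieldType) (G : groupType) (x : D1 k G) : Prop :=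
  gr_good x.1 /\ grgr_good x.2.

Definition D1_add (k : fieldType) (G : groupType) (x y : D1 k G) : D1 k G :=
  (fun h => x.1 h + y.1 h, fun g h => x.2 g h + y.2 g h).

Definition D1_zero (k : fieldType) (G : groupType) : D1 k G :=
  (fun _ => 0, fun _ _ => 0).

Definition D1_one (k : fieldType) (G : groupType) : D1 k G :=
  (@gr_one k G, fun _ _ => 0).

Definition D1_mul (k : fieldType) (G : groupType) (x y : D1 k G) : D1 k G :=
  (gr_mul x.1 y.1,
   fun g h => tw_ab x.1 y.2 g h + tw_ba x.2 y.1 g h + tw_bb x.2 y.2 g h).

Definition Mx_good (k : fieldType) (G : groupType) (n : nat)
    (A : 'M[D1 k G]_n) : Prop :=
  forall i j, D1_good (A i j).

Definition Mx_add (k : fieldType) (G : groupType) (n : nat)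
    (A B : 'M[D1 k G]_n) : 'M[D1 k G]_n :=
  \matrix_(i, j) D1_add (A i j) (B i j).

Definition Mx_mul (k : fieldType) (G : groupType) (n : nat)
    (A B : 'M[D1 k G]_n) : 'M[D1 k G]_n :=
  \matrix_(i, j) \big[@D1_add k G/@D1_zero k G]_(l < n) D1_mul (A i l) (B l j).

Definition Mx_one (k : fieldType) (G : groupType) (n : nat) : 'M[D1 k G]_n :=
  \matrix_(i, j) if i == j then @D1_one k G else @D1_zero k G.

(* Main.v *)
Require Import Defs.
From HB Require Import structures.
From mathcomp Require Import all_boot all_order all_algebra.
From mathcomp Require Import finmap.
From mathcomp Require Import boolp classical_sets cardinality fsbigop.
From mathcomp Require Import ring.
Set Implicit Arguments. Unset Strict Implicit. Unset Printing Implicit Defensive.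
Import Order.TTheory GRing.Theory Num.Theory.
Local Open Scope classical_set_scope.
Local Open Scope ring_scope.

Section S.
Variables (k : fieldType) (G : groupType) (n : nat).

Definition supp_ok (A : 'M[D1 k G]_n) (S E : {fset G}) :=
  forall i j g h, (h \notin S -> (A i j).1 h = 0 /\ (A i j).2 g h = 0) /\
                  (g \notin E -> (A i j).2 g h = 0).

Lemma finT (T : finType) : finite_set [set: T].
Proof. exact: finite_finset. Qed.

Lemma good_supp A : Mx_good A -> exists S E, supp_ok A S E.
Proof.
move=> gA.
pose fa (p : 'I_n * 'I_n) := [set h | (A p.1 p.2).1 h != 0].
pose Ep (p : 'I_n * 'I_n) := [set g | (A p.1 p.2).2 g <> (fun _ => 0)].
pose fb (p : 'I_n * 'I_n) g := [set h | (A p.1 p.2).2 g h != 0].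
pose Sset := \bigcup_(p in [set: 'I_n * 'I_n]) (fa p `|` \bigcup_(g in Ep p) fb p g).
pose Eset := \bigcup_(p in [set: 'I_n * 'I_n]) Ep p.
have finT : finite_set [set: 'I_n * 'I_n] by exact: finite_finset.
have fS : finite_set Sset.
  apply: bigcup_finite => // -[i j] _; have [ga [gb1 gb2]] := gA i j.
  rewrite finite_setU; split; first exact: ga.
  by apply: bigcup_finite => // g _; exact: gb2.
have fE : finite_set Eset.
  by apply: bigcup_finite => // -[i j] _; have [ga [gb1 gb2]] := gA i j.
exists (fset_set Sset), (fset_set Eset) => i j g h; split.
  rewrite in_fset_set // => /negP hS; split.
    apply/eqP; apply: contra_notT hS => hne; rewrite inE.
    by exists (i, j) => //; left.
  apply/eqP; apply: contra_notT hS => hne; rewrite inE.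
  exists (i, j) => //; right; exists g => //=.
  by move=> e; move: hne; rewrite e eqxx.
rewrite in_fset_set // => /negP hE.
apply/eqP; apply: contra_notT hE => hne; rewrite inE.
by exists (i, j) => //= e; move: hne; rewrite e eqxx.
Qed.

Lemma supp_good A S E : supp_ok A S E -> Mx_good A.
Proof.
move=> hA i j; split.
  apply: sub_finite_set (finite_fset S) => h /= hne.
  by apply: contraNT hne => hS; rewrite (proj1 (proj1 (hA i j h h) hS)).
split.
  apply: sub_finite_set (finite_fset E) => g /= hne /=.
  apply: contrapT => /negP hE; apply: hne; apply: funext => h.
  by rewrite (proj2 (hA i j g h) hE).
move=> g; apply: sub_finite_set (finite_fset S) => h /= hne.
by apply: contraNT hne => hS; rewrite (proj2 (proj1 (hA i j g h) hS)).
Qed.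

Section Supp.
Variables (A : 'M[D1 k G]_n) (S E : {fset G}) (hA : supp_ok A S E).
Lemma sa0 i j h : h \notin S -> (A i j).1 h = 0.
Proof. by move=> hS; exact: (proj1 (proj1 (hA i j h h) hS)). Qed.
Lemma sb0 i j g h : h \notin S -> (A i j).2 g h = 0.
Proof. by move=> hS; exact: (proj2 (proj1 (hA i j g h) hS)). Qed.
Lemma sbE i j g h : g \notin E -> (A i j).2 g h = 0.
Proof. by move=> hE; exact: (proj2 (hA i j g h) hE). Qed.
End Supp.

Lemma supp_add A B SA EA SB EB : supp_ok A SA EA -> supp_ok B SB EB ->
  supp_ok (Mx_add A B) (SA `|` SB)%fset (EA `|` EB)%fset.
Proof.
move=> hA hB i j g h; rewrite !mxE /=; split.
  rewrite inE negb_or => /andP[h1 h2].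
  by rewrite (sa0 hA) // (sa0 hB) // (sb0 hA) // (sb0 hB) // addr0.
by rewrite inE negb_or => /andP[h1 h2]; rewrite (sbE hA) // (sbE hB) // addr0.
Qed.

Lemma supp_one : supp_ok (@Mx_one k G n) [fset 1%g]%fset fset0.
Proof.
move=> i j g h; rewrite !mxE; split; last by case: eqP.
rewrite inE => hne; case: eqP => //= _; split=> //.
by rewrite /gr_one; case: eqP => // e; move: hne; rewrite e eqxx.
Qed.

Lemma bigD1_fst (F : 'I_n -> D1 k G) h :
  (\big[@D1_add k G/@D1_zero k G]_(l < n) F l).1 h = \sum_(l < n) (F l).1 h.
Proof. by elim/big_rec2: _ => // l y x _ <-. Qed.
Lemma bigD1_snd (F : 'I_n -> D1 k G) g h :
  (\big[@D1_add k G/@D1_zero k G]_(l < n) F l).2 g h = \sum_(l < n) (F l).2 g h.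
Proof. by elim/big_rec2: _ => // l y x _ <-. Qed.

Definition fprod (SA SB : {fset G}) : {fset G} := [fset (x * y)%g | x in SA, y in SB]%fset.
Definition eprod (EB SA : {fset G}) : {fset G} := [fset (x * y^-1)%g | x in EB, y in SA]%fset.

Lemma fprodP (SA SB : {fset G}) t h : t \in SA -> h \notin fprod SA SB -> (t^-1 * h)%g \notin SB.
Proof.
move=> tS; apply: contra => hS; apply/imfset2P; exists t => //.
by exists (t^-1 * h)%g => //; rewrite mulVKg.
Qed.

Lemma eprodP (EB SA : {fset G}) t g : t \in SA -> g \notin eprod EB SA -> (g * t)%g \notin EB.
Proof.
move=> tS; apply: contra => hS; apply/imfset2P; exists (g * t)%g => //.
by exists t => //; rewrite mulgK.
Qed.

Lemma fsum0 (X Y : G -> k) (P : pred G) :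
  (forall t, ~~ P t -> X t = 0) -> (forall t, P t -> Y t = 0) ->
  \sum_(t \in [set: G]) X t * Y t = 0.
Proof.
move=> hX hY; apply: fsbig1 => t _; case: (boolP (P t)) => Pt.
  by rewrite hY // mulr0.
by rewrite hX // mul0r.
Qed.

Lemma supp_mul A B SA EA SB EB : supp_ok A SA EA -> supp_ok B SB EB ->
  supp_ok (Mx_mul A B) (fprod SA SB) (EA `|` eprod EB SA)%fset.
Proof.
move=> hA hB i j g h; rewrite !mxE bigD1_fst bigD1_snd; split.
  move=> hS; split.
    apply: big1 => l _ /=; apply: (@fsum0 _ _ (mem SA)) => t tS.
      exact: (sa0 hA).
    by rewrite (sa0 hB) // (fprodP tS hS).
  apply: big1 => l _ /=; rewrite /tw_ab /tw_ba /tw_bb.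
  rewrite !(@fsum0 _ _ (mem SA)) ?addr0 // => t tS;
   by rewrite ?(sa0 hA) ?(sb0 hA) ?(sa0 hB) ?(sb0 hB) // (fprodP tS hS).
rewrite inE negb_or => /andP[gEA gE].
apply: big1 => l _ /=; rewrite /tw_ab /tw_ba /tw_bb.
rewrite (@fsum0 _ _ (mem SA)) ?add0r.
- by rewrite !fsbig1 ?addr0 // => t _; rewrite (sbE hA) // mul0r.
- by move=> t tS; rewrite (sa0 hA).
by move=> t tS; rewrite (sbE hB) // (eprodP tS gE).
Qed.

Definition cf (A : 'M[D1 k G]_n) g h i j : k := (A i j).1 h + (A i j).2 g h.

Definition Rop (A : 'M[D1 k G]_n) : (G -> 'rV[k]_n) -> G -> 'rV[k]_n :=
  fun x g => \row_i \sum_(h \in [set: G]) \sum_(j < n) cf A g h i j * x (g * h)%g 0 j.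

Lemma RE' A (S : {fset G}) (x : G -> 'rV[k]_n) g :
  (forall h i, h \notin S -> \sum_(j < n) cf A g h i j * x (g * h)%g 0 j = 0) ->
  Rop A x g = \row_i \sum_(h <- S) \sum_(j < n) cf A g h i j * x (g * h)%g 0 j.
Proof.
by move=> hS; apply/rowP => i; rewrite !mxE (fsbigTE S) // => h hn; rewrite hS.
Qed.

Lemma RE A (S : {fset G}) (x : G -> 'rV[k]_n) g :
  (forall h i j, h \notin S -> cf A g h i j = 0) ->
  Rop A x g = \row_i \sum_(h <- S) \sum_(j < n) cf A g h i j * x (g * h)%g 0 j.
Proof.
move=> hS; apply: RE' => h i hn.
by apply: big1 => j _; rewrite hS // mul0r.
Qed.

Lemma cf0 A S E (hA : supp_ok A S E) g h i j : h \notin S -> cf A g h i j = 0.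
Proof. by move=> hS; rewrite /cf (sa0 hA) // (sb0 hA) // addr0. Qed.

Definition delta_at (y : G) (j : 'I_n) : G -> 'rV[k]_n :=
  fun z => if z == y then delta_mx 0 j else 0.

Lemma cf_of_R A g h i j : Rop A (delta_at (g * h)%g j) g 0 i = cf A g h i j.
Proof.
rewrite (RE' _ (S := [fset h]%fset)).
  rewrite mxE big_seq_fset1 /delta_at eqxx (bigD1 j) //= mxE !eqxx mulr1.
  by rewrite big1 ?addr0 // => j' /negbTE hj; rewrite mxE hj andbF mulr0.
move=> h' i'; rewrite inE /delta_at (inj_eq (mulgI g)) => /negbTE ->.
by apply: big1 => j' _; rewrite mxE mulr0.
Qed.

Lemma fresh (Ginf : infinite_set [set: G]) (E : {fset G}) : exists g, g \notin E.
Proof.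
apply: contrapT => nx; apply: Ginf; apply: sub_finite_set (finite_fset E) => g _ /=.
by apply: contrapT => /negP gE; apply: nx; exists g.
Qed.

Lemma Rop_inj (Ginf : infinite_set [set: G]) A B SA EA SB EB :
  supp_ok A SA EA -> supp_ok B SB EB -> Rop A = Rop B -> A = B.
Proof.
move=> hA hB eAB.
have ecf g h i j : cf A g h i j = cf B g h i j by rewrite -!cf_of_R eAB.
apply/matrixP => i j.
have [g0 g0E] := fresh Ginf (EA `|` EB)%fset.
move: g0E; rewrite inE negb_or => /andP[g0A g0B].
have ha h : (A i j).1 h = (B i j).1 h.
  by have := ecf g0 h i j; rewrite /cf (sbE hA) // (sbE hB) // !addr0.
have hb g h : (A i j).2 g h = (B i j).2 g h.
  by have := ecf g h i j; rewrite /cf ha => /addrI.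
rewrite [A i j]surjective_pairing [B i j]surjective_pairing.
by congr pair; apply: funext => h //; apply: funext => h'.
Qed.

Lemma Rop_add A B SA EA SB EB : supp_ok A SA EA -> supp_ok B SB EB ->
  Rop (Mx_add A B) = ca_add (Rop A) (Rop B).
Proof.
move=> hA hB; have hAB := supp_add hA hB.
apply: funext => x; apply: funext => g; rewrite /ca_add.
have sub1 h : h \notin (SA `|` SB)%fset -> h \notin SA by rewrite inE negb_or => /andP[].
have sub2 h : h \notin (SA `|` SB)%fset -> h \notin SB by rewrite inE negb_or => /andP[].
rewrite !(RE (S := (SA `|` SB)%fset)).
- apply/rowP => i; rewrite !mxE -big_split /=; apply: eq_bigr => h _.
  rewrite -big_split; apply: eq_bigr => j _ /=.
  by rewrite -mulrDl /cf !mxE /= addrACA.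
- by move=> h i j hn; rewrite (cf0 hB) // sub2.
- by move=> h i j hn; rewrite (cf0 hA) // sub1.
by move=> h i j hn; rewrite (cf0 hAB).
Qed.

Lemma Rop_one : Rop (@Mx_one k G n) = id.
Proof.
apply: funext => x; apply: funext => g.
rewrite (RE (S := [fset 1%g]%fset)).
  apply/rowP => i; rewrite mxE big_seq_fset1 mulg1 (bigD1 i) //= big1.
    by rewrite /cf mxE eqxx /= /gr_one eqxx !addr0 mul1r.
  by move=> j /negbTE hj; rewrite /cf mxE eq_sym hj /= addr0 mul0r.
move=> h i j; rewrite inE => /negbTE h1; rewrite /cf mxE.
by case: ifP => _ /=; rewrite ?/gr_one ?h1 addr0.
Qed.


Lemma cf_mul A B SA EA SB EB : supp_ok A SA EA -> supp_ok B SB EB ->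
  forall g h i j, cf (Mx_mul A B) g h i j =
  \sum_(t <- SA) \sum_(l < n) cf A g t i l * cf B (g * t)%g (t^-1 * h)%g l j.
Proof.
move=> hA hB g h i j.
rewrite /cf mxE bigD1_fst bigD1_snd -big_split /= exchange_big /=.
apply: eq_bigr => l _ /=; rewrite /gr_mul /tw_ab /tw_ba /tw_bb.
rewrite !(fsbigTE SA); try by move=> t tS; rewrite ?(sa0 hA) ?(sb0 hA) // mul0r.
rewrite -!big_split /=; apply: eq_bigr => t _; ring.
Qed.

Lemma reindexT (SA SB : {fset G}) t (F : G -> k) : t \in SA ->
  (forall h, h \notin SB -> F h = 0) ->
  \sum_(h <- SB) F h = \sum_(h <- fprod SA SB) F (t^-1 * h)%g.
Proof.
move=> tS hF.
rewrite -(fsbigTE SB F) // -(fsbigTE (fprod SA SB) (fun h => F (t^-1 * h)%g)).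
  apply: reindex_fsbigT; exists (fun h => (t * h)%g) => h; [exact: mulVKg | exact: mulKg].
by move=> h hn; rewrite hF // (fprodP tS hn).
Qed.

Lemma Rop_mul A B SA EA SB EB : supp_ok A SA EA -> supp_ok B SB EB ->
  Rop (Mx_mul A B) = Rop A \o Rop B.
Proof.
move=> hA hB; have hAB := supp_mul hA hB.
apply: funext => x; apply: funext => g /=.
have RB : Rop B x = fun y => \row_l \sum_(h <- SB) \sum_(j < n) cf B y h l j * x (y * h)%g 0 j.
  by apply: funext => y; rewrite (RE (S := SB)) // => h i j hn; rewrite (cf0 hB).
rewrite (RE (S := fprod SA SB)); last by move=> h i j hn; rewrite (cf0 hAB).
rewrite (RE (S := SA)); last by move=> h i j hn; rewrite (cf0 hA).
rewrite RB; apply/rowP => i; rewrite !mxE.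
pose F t l h j := cf A g t i l * (cf B (g * t)%g (t^-1 * h)%g l j * x (g * h)%g 0 j).
transitivity (\sum_(h <- fprod SA SB) \sum_(j < n) \sum_(t <- SA) \sum_(l < n) F t l h j).
  apply: eq_bigr => h _; apply: eq_bigr => j _.
  rewrite (cf_mul hA hB) mulr_suml; apply: eq_bigr => t _.
  by rewrite mulr_suml; apply: eq_bigr => l _; rewrite /F mulrA.
transitivity (\sum_(t <- SA) \sum_(l < n) \sum_(h <- fprod SA SB) \sum_(j < n) F t l h j); last first.
  apply: eq_big_seq => t tS; apply: eq_bigr => l _.
  rewrite mxE (reindexT (SA := SA) (SB := SB) (t := t)) //; last first.
    by move=> h hn /=; apply: big1 => j _; rewrite (cf0 hB) // mul0r.
  rewrite mulr_sumr; apply: eq_bigr => h _; rewrite [RHS]mulr_sumr; apply: eq_bigr => j _.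
  have e : (g * t * (t^-1 * h) = g * h)%g by rewrite -mulgA mulVKg.
  by rewrite /F e.
under eq_bigr => h _ do rewrite exchange_big.
rewrite exchange_big; apply: eq_bigr => t _.
under eq_bigr => h _ do rewrite exchange_big.
by rewrite exchange_big.
Qed.

Lemma Rop_LNUCA A S E : supp_ok A S E -> LNUCA_c (Rop A).
Proof.
move=> hA.
exists S, (fun g (y : S -> 'rV[k]_n) =>
  \row_i \sum_(m : S) \sum_(j < n) cf A g (val m) i j * y m 0 j).
split.
- move=> g a x y; apply/rowP => i; rewrite !mxE big_distrr -big_split /=.
  apply: eq_bigr => m _; rewrite big_distrr -big_split /=.
  by apply: eq_bigr => j _; rewrite !mxE; ring.
- exists E => g h gE hE; apply: funext => y; apply/rowP => i; rewrite !mxE.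
  apply: eq_bigr => m _; apply: eq_bigr => j _.
  by rewrite /cf !(sbE hA) //.
apply: funext => x; apply: funext => g; rewrite /nuca.
rewrite (RE (S := S)); last by move=> h i j hn; rewrite (cf0 hA).
by apply/rowP => i; rewrite !mxE big_seq_fsetE.
Qed.

Section Lin.
Variables (M : {fset G}) (f : (M -> 'rV[k]_n) -> 'rV[k]_n) (hf : is_klinear f).

Lemma lin0 : f (fun _ => 0) = 0.
Proof.
have := hf 1 (fun _ => 0) (fun _ => 0); rewrite /= scaler0 addr0 scale1r => e.
by apply: (@addrI _ (f (fun _ => 0))); rewrite addr0 -e.
Qed.

Lemma linZ a x : f (fun m => a *: x m) = a *: f x.
Proof.
have := hf a x (fun _ => 0); rewrite lin0 addr0 => <-.
by congr f; apply: funext => m; rewrite addr0.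
Qed.

Lemma linS (I : Type) (r : seq I) (F : I -> M -> 'rV[k]_n) :
  f (fun m => \sum_(i <- r) F i m) = \sum_(i <- r) f (F i).
Proof.
elim: r => [|a r IH].
  rewrite big_nil -[RHS]lin0; congr f; apply: funext => m; exact: big_nil.
have -> : (fun m => \sum_(i <- a :: r) F i m) =
          (fun m => 1 *: F a m + \sum_(i <- r) F i m).
  by apply: funext => m; rewrite big_cons scale1r.
by rewrite hf scale1r IH big_cons.
Qed.
End Lin.

Lemma LNUCA_Rop (Ginf : infinite_set [set: G]) tau : LNUCA_c tau ->
  exists A S E, supp_ok A S E /\ tau = Rop A.
Proof.
move=> [M [s [lin [E hE] ->]]].
have [g0 g0E] := fresh Ginf E.
pose dl (m : M) (j : 'I_n) : M -> 'rV[k]_n :=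
  fun m' => if m' == m then delta_mx 0 j else 0.
pose C g (m : M) i j := s g (dl m j) 0 i.
pose c g h i j := if (insub h : option M) is Some m then C g m i j else 0.
pose A := \matrix_(i, j) ((fun h => c g0 h i j), (fun g h => c g h i j - c g0 h i j)) : 'M[D1 k G]_n.
have cM g h i j : h \notin M -> c g h i j = 0 by move=> hM; rewrite /c insubN.
have cE g h i j : g \notin E -> c g h i j = c g0 h i j by move=> gE; rewrite /c /C (hE g g0).
have cfA g h i j : cf A g h i j = c g h i j by rewrite /cf mxE /= addrC subrK.
have hA : supp_ok A M E.
  move=> i j g h; rewrite mxE /=; split.
    by move=> hM; rewrite !cM // subrr.
  by move=> gE; rewrite cE // subrr.
exists A, M, E; split => //.
apply: funext => x; apply: funext => g; rewrite /nuca.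
rewrite (RE (S := M)); last by move=> h i j hn; rewrite (cf0 hA).
set y := fun m : M => x (g * val m)%g.
have dec : y = fun m' => \sum_(m <- index_enum M) \sum_(j < n) y m 0 j *: dl m j m'.
  apply: funext => m'; rewrite (bigD1 m') //= [X in _ + X]big1 ?addr0.
    by rewrite /dl eqxx -row_sum_delta.
  move=> m hm; apply: big1 => j _.
  by rewrite /dl eq_sym (negbTE hm) scaler0.
rewrite dec (linS (lin g)); apply/rowP => i; rewrite summxE mxE big_seq_fsetE /=.
apply: eq_bigr => m _; rewrite (linS (lin g)) summxE; apply: eq_bigr => j _.
by rewrite (linZ (lin g)) mxE cfA /c valK /C mulrC.
Qed.

Definition phi (tau : (G -> 'rV[k]_n) -> G -> 'rV[k]_n) : 'M[D1 k G]_n :=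
  match pselect (exists A, Mx_good A /\ Rop A = tau) with
  | left h => proj1_sig (cid h)
  | right _ => @Mx_one k G n
  end.

Lemma phi_R (Ginf : infinite_set [set: G]) A : Mx_good A -> phi (Rop A) = A.
Proof.
move=> gA; rewrite /phi; case: pselect => [h|nh]; last first.
  by exfalso; apply: nh; exists A.
case: (cid h) => B [gB eB] /=.
have [SA [EA hA]] := good_supp gA; have [SB [EB hB]] := good_supp gB.
exact: (Rop_inj Ginf hB hA eB).
Qed.

End S.

Theorem theoremA (k : fieldType) (G : groupType)
    (Ginf : infinite_set [set: G]) (n : nat) (hn : (1 <= n)%N) :
  exists phi : ((G -> 'rV[k]_n) -> (G -> 'rV[k]_n)) -> 'M[D1 k G]_n,
    (forall tau, LNUCA_c tau -> Mx_good (phi tau)) /\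
    (forall t1 t2, LNUCA_c t1 -> LNUCA_c t2 -> phi t1 = phi t2 -> t1 = t2) /\
    (forall A, Mx_good A -> exists2 tau, LNUCA_c tau & phi tau = A) /\
    (forall t1 t2, LNUCA_c t1 -> LNUCA_c t2 ->
       phi (ca_add t1 t2) = Mx_add (phi t1) (phi t2)) /\
    (forall t1 t2, LNUCA_c t1 -> LNUCA_c t2 ->
       phi (t1 \o t2) = Mx_mul (phi t1) (phi t2)) /\
    phi id = @Mx_one k G n.
Proof.
exists (@phi k G n); split; [|split; [|split; [|split; [|split]]]].
- move=> tau /(LNUCA_Rop Ginf) [A [S [E [hA ->]]]].
  by rewrite phi_R //; exact: supp_good hA.
- move=> t1 t2 /(LNUCA_Rop Ginf) [A1 [S1 [E1 [h1 ->]]]]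
    /(LNUCA_Rop Ginf) [A2 [S2 [E2 [h2 ->]]]].
  by rewrite !phi_R //; [move->|exact: supp_good h2|exact: supp_good h1].
- move=> A gA; have [S [E hA]] := good_supp gA.
  by exists (Rop A); [exact: Rop_LNUCA hA | exact: phi_R].
- move=> t1 t2 /(LNUCA_Rop Ginf) [A1 [S1 [E1 [h1 ->]]]]
    /(LNUCA_Rop Ginf) [A2 [S2 [E2 [h2 ->]]]].
  rewrite -(Rop_add h1 h2) !phi_R //; try exact: supp_good h1; try exact: supp_good h2.
  exact: supp_good (supp_add h1 h2).
- move=> t1 t2 /(LNUCA_Rop Ginf) [A1 [S1 [E1 [h1 ->]]]]
    /(LNUCA_Rop Ginf) [A2 [S2 [E2 [h2 ->]]]].
  rewrite -(Rop_mul h1 h2) !phi_R //; try exact: supp_good h1; try exact: supp_good h2.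
  exact: supp_good (supp_mul h1 h2).
by rewrite -Rop_one phi_R //; exact: supp_good (@supp_one k G n).
Qed.
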